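(* Let $A=(a_{ij})$ be an $n\times n$ symmetric matrix with nonnegative entries and zero diagonal (the weighted adjacency matrix of an undirected edge-weighted graph without self-loops on vertex set $V=\{1,\dots,n\}$). Let $S\subseteq V$ with $S\neq\emptyset$, and define $$\gamma_S=\max_{\mathbf{x}\in\Delta_{V\setminus S}}\ \min_{i\in S}\ \frac{\mathbf{x}'A\mathbf{x}-(A\mathbf{x})_i}{\mathbf{x}'\mathbf{x}}.$$ Let $\alpha>\gamma_S$. If $\mathbf{x}$ is a local maximizer of $f_S^\alpha(\mathbf{x})=\mathbf{x}'(A-\alpha\hat I_S)\mathbf{x}$ over $\Delta$, then $\sigma(\mathbf{x})\cap S\neq\emptyset$.
   Context: $\Delta=\{\mathbf{x}\in\mathbb{R}^n:\sum_i x_i=1,\ x_i\ge 0\}$ is the standard simplex; for $T\subseteq V$, $\Delta_T=\{\mathbf{x}\in\Delta:\sigma(\mathbf{x})\subseteq T\}$, where $\sigma(\mathbf{x})=\{i\in V: x_i>0\}$ is the support. $\hat I_S$ is the $n\times n$ diagonal matrix whose diagonal entries are $1$ at indices in $V\setminus S$ and $0$ at indices in $S$. A prime denotes transposition. *)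

(* Defs.v *)
From HB Require Import structures.
From mathcomp Require Import all_boot all_order all_algebra.
From mathcomp Require Import classical_sets reals.
Set Implicit Arguments. Unset Strict Implicit. Unset Printing Implicit Defensive.
Import Order.TTheory GRing.Theory Num.Theory.
Local Open Scope ring_scope.

Section Defs.
Variables (R : realType) (n : nat).

Definition supp (x : 'cV[R]_n) : {set 'I_n} := [set i | 0 < x i 0].

Definition in_simplex (x : 'cV[R]_n) : Prop :=
  (forall i, 0 <= x i 0) /\ \sum_i x i 0 = 1.

Definition in_simplex_on (T : {set 'I_n}) (x : 'cV[R]_n) : Prop :=
  in_simplex x /\ supp x \subset T.

Definition hatI (S : {set 'I_n}) : 'M[R]_n :=
  \matrix_(i, j) (((i == j) && (i \notin S))%:R).

Definition qform (M : 'M[R]_n) (x : 'cV[R]_n) : R := (x^T *m M *m x) 0 0.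

(* minimum of F over a (nonempty) set S; 0 if S is empty *)
Definition minS (S : {set 'I_n}) (F : 'I_n -> R) : R :=
  match [pick i in S] with
  | Some i0 => \big[Num.min/F i0]_(i in S) F i
  | None => 0
  end.

Definition ratio (A : 'M[R]_n) (x : 'cV[R]_n) (i : 'I_n) : R :=
  (qform A x - (A *m x) i 0) / qform 1%:M x.

(* gamma_S = max_{x in Delta_{V\S}} min_{i in S} ratio (taken as a supremum) *)
Definition gammaS (A : 'M[R]_n) (S : {set 'I_n}) : R :=
  sup [set minS S (ratio A x) | x in in_simplex_on (~: S)]%classic.

Definition fSa (A : 'M[R]_n) (S : {set 'I_n}) (alpha : R) (x : 'cV[R]_n) : R :=
  qform (A - alpha *: hatI S) x.

Definition local_max_simplex (f : 'cV[R]_n -> R) (x : 'cV[R]_n) : Prop :=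
  in_simplex x /\
  exists2 eps : R, 0 < eps &
    forall y : 'cV[R]_n, in_simplex y ->
      (forall i, `|y i 0 - x i 0| < eps) -> f y <= f x.

End Defs.

(* Main.v *)
Require Import Defs.
From HB Require Import structures.
From mathcomp Require Import all_boot all_order all_algebra.
From mathcomp Require Import classical_sets reals.
From mathcomp Require Import ring lra.
Import Order.TTheory GRing.Theory Num.Theory.
Local Open Scope ring_scope.

Section Aux.
Variables (R : realType) (n : nat).
Implicit Types (M : 'M[R]_n) (z : 'cV[R]_n).

Lemma qformE M z : qform M z = \sum_k (\sum_j z j 0 * M j k) * z k 0.
Proof.
rewrite /qform mxE; apply: eq_bigr => k _; rewrite mxE; congr (_ * _).
by apply: eq_bigr => j _; rewrite mxE.
Qed.

Lemma qform1E z : qform 1%:M z = \sum_k z k 0 ^+ 2.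
Proof. by rewrite /qform mulmx1 mxE; apply: eq_bigr => k _; rewrite mxE expr2. Qed.

Lemma sq_le_Q z l : z l 0 ^+ 2 <= \sum_k z k 0 ^+ 2.
Proof.
rewrite (bigD1 l) //= lerDl; apply: sumr_ge0 => ? _; exact: sqr_ge0.
Qed.

Lemma prod_le_Q z j k : (forall i, 0 <= z i 0) ->
  z j 0 * z k 0 <= \sum_l z l 0 ^+ 2.
Proof.
move=> z0; case: (leP (z j 0) (z k 0)) => h.
  apply: le_trans (sq_le_Q z k); rewrite expr2; exact: ler_wpM2r.
apply: le_trans (sq_le_Q z j); rewrite expr2; apply: ler_wpM2l => //.
exact: ltW.
Qed.

Lemma qform_bound M z : (forall i j, 0 <= M i j) -> (forall i, 0 <= z i 0) ->
  qform M z <= (\sum_k \sum_j M j k) * qform 1%:M z.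
Proof.
move=> M0 z0; rewrite qformE qform1E mulr_suml; apply: ler_sum => k _.
rewrite !mulr_suml; apply: ler_sum => j _.
have -> : z j 0 * M j k * z k 0 = M j k * (z j 0 * z k 0) by ring.
apply: ler_wpM2l => //; exact: prod_le_Q.
Qed.

End Aux.

Section Aux2.
Variables (R : realType) (n : nat).

Lemma minS_att (S : {set 'I_n}) (F : 'I_n -> R) : S != finset.set0 ->
  exists2 i, i \in S & minS S F = F i.
Proof.
move=> Sne; rewrite /minS; case: pickP => [i0 i0S | none].
  apply: (big_ind (fun v => exists2 i, i \in S & v = F i)).
  - by exists i0.
  - move=> a b [i iS ->] [j jS ->]; case: (leP (F i) (F j)) => h.
      by exists i => //; rewrite min_l.
    by exists j => //; rewrite min_r // ltW.
  - by move=> i iS; exists i.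
by move: Sne; case/set0Pn => i; rewrite none.
Qed.

Lemma bilE (u W : 'cV[R]_n) : (u^T *m W) 0 0 = \sum_j u j 0 * W j 0.
Proof. by rewrite mxE; apply: eq_bigr => j _; rewrite mxE. Qed.

Lemma bilDZr (u V W : 'cV[R]_n) (a b : R) :
  (u^T *m (a *: V + b *: W)) 0 0 = a * (u^T *m V) 0 0 + b * (u^T *m W) 0 0.
Proof.
rewrite !bilE !mulr_sumr -big_split /=; apply: eq_bigr => j _; rewrite !mxE; ring.
Qed.

Lemma bilDZl (u v W : 'cV[R]_n) (a b : R) :
  ((a *: u + b *: v)^T *m W) 0 0 = a * (u^T *m W) 0 0 + b * (v^T *m W) 0 0.
Proof.
rewrite !bilE !mulr_sumr -big_split /=; apply: eq_bigr => j _; rewrite !mxE; ring.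
Qed.

Lemma fS_E (A : 'M[R]_n) S alpha (z : 'cV[R]_n) :
  fSa A S alpha z = (z^T *m (A *m z)) 0 0 - alpha * (z^T *m (@hatI R n S *m z)) 0 0.
Proof.
rewrite /fSa /qform -mulmxA mulmxBl -scalemxAl mulmxBr -scalemxAr.
by rewrite [LHS]mxE [X in _ + X]mxE [X in _ - X]mxE.
Qed.

Lemma ratio_le (A : 'M[R]_n) (z : 'cV[R]_n) i : (forall i j, 0 <= A i j) ->
  (forall i, 0 <= z i 0) -> Defs.ratio A z i <= \sum_k \sum_j A j k.
Proof.
move=> A0 z0; rewrite /Defs.ratio.
have C0 : 0 <= \sum_k \sum_j A j k by apply: sumr_ge0 => k _; apply: sumr_ge0.
have Q0 : 0 <= qform 1%:M z by rewrite qform1E; apply: sumr_ge0 => k _; exact: sqr_ge0.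
have a0 : 0 <= (A *m z) i 0.
  by rewrite mxE; apply: sumr_ge0 => j _; apply: mulr_ge0.
have := @qform_bound _ _ A z A0 z0.
move=> hb; case: (eqVneq (qform 1%:M z) 0) => [->|Qn].
  by rewrite invr0 mulr0.
have Qp : 0 < qform 1%:M z by rewrite lt_def Qn Q0.
rewrite ler_pdivrMr //; lra.
Qed.

End Aux2.

Theorem proposition1 (R : realType) (n : nat) (A : 'M[R]_n) (S : {set 'I_n})
    (alpha : R) (x : 'cV[R]_n) :
  A^T = A ->
  (forall i j, 0 <= A i j) ->
  (forall i, A i i = 0) ->
  S != finset.set0 ->
  gammaS A S < alpha ->
  local_max_simplex (fSa A S alpha) x ->
  supp x :&: S != finset.set0.
Proof.
move=> sym A0 Ad0 Sne gam [[x0 xs] [eps eps0 loc]].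
apply/negP => /eqP H0.
have xS : forall j, j \in S -> x j 0 = 0.
  move=> j jS; apply/eqP; rewrite eq_le x0 andbT leNgt; apply/negP => xj.
  have : j \in supp x :&: S by rewrite inE jS andbT /supp inE.
  by rewrite H0 inE.
have Asym : forall i j, A j i = A i j.
  by move=> i j; rewrite -{1}sym mxE.
set C := \sum_k \sum_j A j k.
move: gam; rewrite /gammaS; set E := (X in sup X) => gam.
have ub : has_ubound E.
  exists C; move=> _ [z [[z0 _] _] <-].
  have [j jS ->] := @minS_att R n S (Defs.ratio A z) Sne.
  exact: ratio_le.
have xsimp : in_simplex_on (~: S) x.
  split; first by split.
  apply/fintype.subsetP => j; rewrite /supp !inE => xj; apply/negP => jS.
  by rewrite xS // ltxx in xj.
have mx : minS S (Defs.ratio A x) < alpha.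
  apply: le_lt_trans gam; apply: (ub_le_sup ub); by exists x.
have [i iS ri] := @minS_att R n S (Defs.ratio A x) Sne.
rewrite ri {ri} /Defs.ratio in mx.
set q := qform A x in mx; set Q := qform 1%:M x in mx.
set a := (A *m x) i 0 in mx.
have Q0 : 0 <= Q by rewrite /Q qform1E; apply: sumr_ge0 => k _; exact: sqr_ge0.
have Qn : Q != 0.
  apply/eqP => /eqP; rewrite /Q qform1E psumr_eq0 => [|k _]; last exact: sqr_ge0.
  move/allP => H.
  have : \sum_k x k 0 = 0.
    by apply: big1 => k _; apply/eqP; rewrite -sqrf_eq0; exact: H (mem_index_enum k).
  by rewrite xs => /eqP; rewrite oner_eq0.
have Qp : 0 < Q by rewrite lt_def Qn Q0.
rewrite ltr_pdivrMr // in mx.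
have a0 : 0 <= a by rewrite /a mxE; apply: sumr_ge0 => j _; apply: mulr_ge0.
set e : 'cV[R]_n := delta_mx i 0.
have eT : forall W : 'cV[R]_n, (e^T *m W) 0 0 = W i 0.
  by move=> W; rewrite /e trmx_delta -rowE mxE.
have Aei : (A *m e) i 0 = 0 by rewrite /e -colE mxE Ad0.
have xAe : (x^T *m (A *m e)) 0 0 = a.
  rewrite bilE /a mxE /e -colE; apply: eq_bigr => j _; rewrite mxE Asym mulrC.
  by [].
have hx : @hatI R n S *m x = x.
  apply/matrixP => j k; rewrite (ord1 k) mxE (bigD1 j) //= big1 ?addr0.
    rewrite mxE eqxx; case: (boolP (j \in S)) => jS /=.
      by rewrite mul0r xS.
    by rewrite mul1r.
  by move=> l /negbTE lj; rewrite mxE eq_sym lj /= mul0r.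
have he : @hatI R n S *m e = 0.
  apply/matrixP => j k; rewrite (ord1 k) /e -colE !mxE.
  case: (eqVneq j i) => [->|ji]; first by rewrite iS andbF.
  by [].
have xAx : (x^T *m (A *m x)) 0 0 = q by rewrite /q /qform mulmxA.
have xx : (x^T *m x) 0 0 = Q by rewrite /Q /qform mulmx1.
set F := q - alpha * Q.
have fx : fSa A S alpha x = F by rewrite fS_E hx xAx xx.
set d := a - F.
have dpos : 0 < d by rewrite /d /F; lra.
set c := F - 2 * a.
have nc : - c <= `|c| by rewrite -normrN ler_norm.
have pc : c <= `|c| by rewrite ler_norm.
set t := Num.min (1/2) (Num.min (eps/2) (d / (`|c| + 1))).
have c1 : 0 < `|c| + 1 by apply: ltr_pwDr => //.
have tpos : 0 < t.
  rewrite /t !lt_min; apply/andP; split; first lra.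
  apply/andP; split; first lra.
  exact: divr_gt0.
have th : t <= 1/2 by rewrite /t ge_min lexx.
have te : t <= eps/2 by rewrite /t ge_min [X in _ || X]ge_min lexx orbT.
have td : t * (`|c| + 1) <= d.
  rewrite -ler_pdivlMr //; by rewrite /t ge_min [X in _ || X]ge_min lexx !orbT.
set y : 'cV[R]_n := (1 - t) *: x + t *: e.
have ej : forall j, e j 0 = (j == i)%:R by move=> j; rewrite /e mxE andbT.
have x1 : forall j, x j 0 <= 1.
  move=> j; rewrite -xs (bigD1 j) //= lerDl; exact: sumr_ge0.
have yj : forall j, y j 0 = (1 - t) * x j 0 + t * (j == i)%:R.
  by move=> j; rewrite /y /e !mxE andbT.
have ysimp : in_simplex y.
  split.
    move=> j; rewrite yj; apply: addr_ge0; apply: mulr_ge0 => //; try lra.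
  under eq_bigr do rewrite yj.
  rewrite big_split /= -!mulr_sumr xs (bigD1 i) //= eqxx big1 ?addr0.
    by rewrite /= !mulr1 subrK.
  by move=> j /negbTE ->.
have ybd : forall j, `|y j 0 - x j 0| < eps.
  move=> j; rewrite yj ltr_norml; have := x0 j; have := x1 j.
  case: (j == i) => /= h1 h2; apply/andP; split; nra.
have fy : fSa A S alpha y = (1 - t) ^+ 2 * F + 2 * t * (1 - t) * a.
  have Ay : A *m y = (1 - t) *: (A *m x) + t *: (A *m e).
    by rewrite /y mulmxDr -!scalemxAr.
  have Hy : @hatI R n S *m y = (1 - t) *: x + t *: (@hatI R n S *m e).
    by rewrite /y mulmxDr -!scalemxAr hx.
  have z0m : forall u : 'cV[R]_n, (u^T *m (0 : 'cV[R]_n)) 0 0 = 0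
    by move=> u; rewrite bilE big1 // => j _; rewrite mxE mulr0.
  rewrite fS_E Ay Hy /y !bilDZl !bilDZr !eT he z0m.
  have m00 : (0 : 'cV[R]_n) i 0 = 0 by rewrite mxE.
  rewrite xAx xAe Aei xx xS // m00 -/a /F; ring.
have := loc y ysimp ybd; rewrite fy fx.
have k : 0 < 2 * d + t * c by nra.
have kk : 0 < t * (2 * d + t * c) by exact: mulr_gt0.
have idt : (1 - t) ^+ 2 * F + 2 * t * (1 - t) * a - F = t * (2 * d + t * c).
  by rewrite /d /c; ring.
lra.
Qed.
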